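(* Let $n\ge0$ be an integer with $\chi_n>c^2$. Let $x_1<x_2<\dots$ be the roots of $\psi_n$ in $(1,\infty)$ and $y_1<y_2<\dots$ the roots of $\psi_n'$ in $(1,\infty)$. Then $$1<\frac{\sqrt{\chi_n}}{c}<y_1<x_1<y_2<x_2<\cdots.$$
   Context: For a real number $c>0$, let $\psi_0,\psi_1,\dots$ be the prolate spheroidal wave functions of band limit $c$: the real $L^2[-1,1]$-normalized eigenfunctions of $F_c[\varphi](x)=\int_{-1}^1\varphi(t)e^{icxt}\,dt$ with eigenvalues $\lambda_n$ ordered by $|\lambda_n|\ge|\lambda_{n+1}|$, extended to entire functions by $\lambda_n\psi_n(x)=\int_{-1}^1\psi_n(t)e^{icxt}\,dt$. $\chi_0<\chi_1<\dots$ are the positive numbers such that $\psi_n$ satisfies $(1-x^2)\psi''(x)-2x\psi'(x)+(\chi_n-c^2x^2)\psi(x)=0$ for all $x$. *)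

(* Defs.v *)
From Stdlib Require Import Reals.
From Coquelicot Require Import Coquelicot.
Open Scope R_scope.

Definition expi (theta : R) : C := (cos theta, sin theta).

Definition fourier_eigen (c : R) (f : R -> R) (mu : C) (x : R) : Prop :=
  is_RInt (fun t : R => RtoC (f t) * expi (c * x * t))%C (-1) 1 (mu * RtoC (f x))%C.

(* The prolate spheroidal wave functions of band limit c:
   psi n  (restricted to the real line; the entire extension is given by
           lambda_n psi_n(x) = int_{-1}^1 psi_n(t) e^{icxt} dt for all real x),
   lam n  the eigenvalues, chi n the ODE eigenvalues. *)
Definition pswf_system (c : R) (psi : nat -> R -> R) (lam : nat -> C)
    (chi : nat -> R) : Prop :=
  (forall n x, fourier_eigen c (psi n) (lam n) x) /\
  (forall n, lam n <> 0%C) /\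
  (forall n, is_RInt (fun t => psi n t ^ 2) (-1) 1 1) /\
  (forall n m, n <> m -> is_RInt (fun t => psi n t * psi m t) (-1) 1 0) /\
  (forall n, Cmod (lam (S n)) <= Cmod (lam n)) /\
  (forall (f : R -> R) (mu : C),
      (exists v, 0 < v /\ is_RInt (fun t => f t ^ 2) (-1) 1 v) ->
      (forall x, -1 <= x <= 1 -> fourier_eigen c f mu x) ->
      exists n k, forall x, -1 <= x <= 1 -> f x = k * psi n x) /\
  (forall n, 0 < chi n) /\
  (forall n, chi n < chi (S n)) /\
  (forall n x, ex_derive (psi n) x /\ ex_derive (Derive (psi n)) x) /\
  (forall n x,
      (1 - x ^ 2) * Derive (Derive (psi n)) x - 2 * x * Derive (psi n) x
      + (chi n - c ^ 2 * x ^ 2) * psi n x = 0).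

(* Main.v *)
Require Import Defs.
From Stdlib Require Import Reals.
From Coquelicot Require Import Coquelicot.
From Stdlib Require Import Lra Psatz ClassicalEpsilon Classical.
Open Scope R_scope.

Lemma exd_cont (g : R -> R) x : ex_derive g x -> continuity_pt g x.
Proof. intro H. apply continuity_pt_filterlim. exact (ex_derive_continuous (K:=R_AbsRing) (V:=R_NormedModule) g x H). Qed.

Lemma mono_le (g dg : R -> R) a b :
  a <= b -> (forall x, a <= x <= b -> is_derive g x (dg x)) ->
  (forall x, a <= x <= b -> 0 <= dg x) -> g a <= g b.
Proof.
  intros Hab Hd Hp.
  destruct (MVT_gen g a b dg) as [c0 [Hc Heq]].
  - intros x Hx. apply Hd. rewrite Rmin_left in Hx by lra. rewrite Rmax_right in Hx by lra. lra.
  - intros x Hx. rewrite Rmin_left in Hx by lra. rewrite Rmax_right in Hx by lra.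
    apply exd_cont. eexists. apply Hd; lra.
  - rewrite Rmin_left in Hc by lra. rewrite Rmax_right in Hc by lra.
    assert (0 <= dg c0) by (apply Hp; lra). nra.
Qed.

Lemma mono_lt (g dg : R -> R) a b :
  a < b -> (forall x, a <= x <= b -> is_derive g x (dg x)) ->
  (forall x, a <= x <= b -> 0 < dg x) -> g a < g b.
Proof.
  intros Hab Hd Hp.
  destruct (MVT_gen g a b dg) as [c0 [Hc Heq]].
  - intros x Hx. apply Hd. rewrite Rmin_left in Hx by lra. rewrite Rmax_right in Hx by lra. lra.
  - intros x Hx. rewrite Rmin_left in Hx by lra. rewrite Rmax_right in Hx by lra.
    apply exd_cont. eexists. apply Hd; lra.
  - rewrite Rmin_left in Hc by lra. rewrite Rmax_right in Hc by lra.
    assert (0 < dg c0) by (apply Hp; lra). nra.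
Qed.

Lemma mvt_bound (g dg : R -> R) a b M :
  a <= b -> (forall x, a <= x <= b -> is_derive g x (dg x)) ->
  (forall x, a <= x <= b -> Rabs (dg x) <= M) -> Rabs (g b - g a) <= M * (b - a).
Proof.
  intros Hab Hd Hp.
  destruct (MVT_gen g a b dg) as [c0 [Hc Heq]].
  - intros x Hx. apply Hd. rewrite Rmin_left in Hx by lra. rewrite Rmax_right in Hx by lra. lra.
  - intros x Hx. rewrite Rmin_left in Hx by lra. rewrite Rmax_right in Hx by lra.
    apply exd_cont. eexists. apply Hd; lra.
  - rewrite Rmin_left in Hc by lra. rewrite Rmax_right in Hc by lra.
    rewrite Heq, Rabs_mult, (Rabs_right (b - a)) by lra.
    apply Rmult_le_compat_r; [lra|]. apply Hp; lra.
Qed.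

Lemma loc_sign (g : R -> R) r l : is_derive g r l -> 0 < l ->
  exists d, 0 < d /\ forall h, 0 < h < d -> g (r - h) < g r < g (r + h).
Proof.
  intros H Hl. apply is_derive_Reals in H.
  destruct (H l Hl) as [d Hd]. exists d. split; [apply cond_pos|].
  intros h Hh. split.
  - assert (Hh' : -h <> 0) by lra. assert (Ha : Rabs (-h) < d) by (rewrite Rabs_Ropp, Rabs_right; lra).
    specialize (Hd _ Hh' Ha). apply Rabs_def2 in Hd. destruct Hd as [_ Hd].
    replace (r - h) with (r + - h) by ring.
    assert (0 < (g (r + - h) - g r) / - h) by lra.
    unfold Rdiv in H0. rewrite <- Ropp_inv_permute in H0 by lra.
    assert (0 < / h) by (apply Rinv_0_lt_compat; lra). nra.
  - assert (Hh' : h <> 0) by lra. assert (Ha : Rabs h < d) by (rewrite Rabs_right; lra).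
    specialize (Hd _ Hh' Ha). apply Rabs_def2 in Hd. destruct Hd as [_ Hd].
    assert (0 < (g (r + h) - g r) / h) by lra.
    unfold Rdiv in H0. assert (0 < / h) by (apply Rinv_0_lt_compat; lra).
    assert (0 < g (r+h) - g r). { apply (Rmult_lt_reg_r (/ h)); lra. } lra.
Qed.

Lemma loc_sign_neg (g : R -> R) r l : is_derive g r l -> l < 0 ->
  exists d, 0 < d /\ forall h, 0 < h < d -> g (r + h) < g r < g (r - h).
Proof.
  intros H Hl. assert (H' : is_derive (fun x => - g x) r (- l)) by (apply (is_derive_opp g); exact H).
  destruct (loc_sign _ _ _ H') as [d [Hd Hs]]; [lra|].
  exists d; split; auto. intros h Hh; specialize (Hs h Hh); lra.
Qed.

Lemma cont_eps (g : R -> R) x e : continuity_pt g x -> 0 < e ->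
  exists d, 0 < d /\ forall y, Rabs (y - x) < d -> Rabs (g y - g x) < e.
Proof.
  intros H He. destruct (H e He) as [d [Hd Hy]]. exists d; split; auto.
  intros y Hyx. destruct (Req_dec y x) as [->|Hne].
  - rewrite Rminus_eq_0, Rabs_R0; lra.
  - apply (Hy y). split; [split; [exact I| auto]|]. exact Hyx.
Qed.

Lemma cont_nz (g : R -> R) x : continuity_pt g x -> g x <> 0 ->
  exists d, 0 < d /\ forall y, Rabs (y - x) < d -> g y <> 0.
Proof.
  intros H Hn. destruct (cont_eps g x (Rabs (g x)) H) as [d [Hd Hy]].
  - now apply Rabs_pos_lt.
  - exists d; split; auto. intros y Hyx Hg. specialize (Hy y Hyx).
    rewrite Hg, Rminus_0_l, Rabs_Ropp in Hy. lra.
Qed.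

Lemma first_zero (g : R -> R) t p :
  (forall x, continuity_pt g x) -> t < p -> g p = 0 ->
  (exists e, 0 < e /\ forall r, t < r < t + e -> g r <> 0) ->
  exists s, t < s <= p /\ g s = 0 /\ forall r, t < r < s -> g r <> 0.
Proof.
  intros Hc Htp Hp [e [He Hne]].
  set (E := fun s => s <= p /\ forall r, t < r < s -> g r <> 0).
  assert (HB : bound E) by (exists p; intros s [Hs _]; lra).
  assert (HE : E t) by (split; [lra| intros r Hr; lra]).
  destruct (completeness E HB (ex_intro _ t HE)) as [sg [Hub Hlub]].
  assert (Hle : sg <= p) by (apply Hlub; intros s [Hs _]; lra).
  assert (Hint : forall r, t < r < sg -> g r <> 0).
  { intros r Hr Hg0.
    assert (sg <= r); [|lra].
    apply Hlub. intros s [Hs Hs2]. destruct (Rle_lt_dec s r) as [Hx|Hx]; auto.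
    exfalso. apply (Hs2 r); auto. lra. }
  assert (Hgt : t < sg).
  { assert (E (t + Rmin e (p - t) / 2)).
    { split. { assert (Rmin e (p - t) <= p - t) by apply Rmin_r. lra. }
      intros r Hr. apply Hne. assert (Rmin e (p - t) <= e) by apply Rmin_l. lra. }
    apply Hub in H. assert (0 < Rmin e (p - t)) by (apply Rmin_pos; lra). lra. }
  exists sg. split; [lra|]. split; auto.
  destruct (Req_dec (g sg) 0) as [H0|Hn]; auto. exfalso.
  destruct (Req_dec sg p) as [->|Hsp]; [contradiction|].
  destruct (cont_nz g sg (Hc sg) Hn) as [d [Hd Hy]].
  assert (E (Rmin (sg + d / 2) p)).
  { split; [apply Rmin_r|]. intros r Hr.
    destruct (Rlt_dec r sg) as [Hx|Hx]; [apply Hint; lra|].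
    apply Hy. assert (Rmin (sg + d / 2) p <= sg + d/2) by apply Rmin_l.
    rewrite Rabs_right; lra. }
  apply Hub in H. unfold Rmin in H. destruct (Rle_dec (sg + d / 2) p); lra.
Qed.

Lemma cont_right0 (g : R -> R) x : continuity_pt g x -> (forall y, x < y -> g y = 0) -> g x = 0.
Proof.
  intros Hc Hy. destruct (Req_dec (g x) 0) as [H|H]; auto.
  destruct (cont_nz g x Hc H) as [d [Hd Hn]]. exfalso. apply (Hn (x + d / 2)).
  - rewrite Rabs_right; lra.
  - apply Hy; lra.
Qed.

Lemma cont_all (g : R -> R) : (forall x, continuity_pt g x) -> continuity g.
Proof. intros H x; apply H. Qed.

Lemma ivt_pn (g : R -> R) u v : (forall x, continuity_pt g x) -> u <= v -> 0 < g u -> g v < 0 ->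
  exists z, u <= z <= v /\ g z = 0.
Proof.
  intros Hc Huv Hu Hv.
  assert (Huv' : u < v) by (destruct Huv as [H|H]; auto; subst; lra).
  destruct (IVT (fun x => - g x) u v) as [z [Hz Hgz]]; auto.
  - apply continuity_opp. intro x; apply Hc.
  - lra.
  - lra.
  - exists z; split; auto. lra.
Qed.

Lemma const_pos (g : R -> R) u v : (forall x, continuity_pt g x) -> u <= v ->
  (forall r, u <= r <= v -> g r <> 0) -> 0 < g u -> 0 < g v.
Proof.
  intros Hc Huv Hn Hu. destruct (Rlt_le_dec 0 (g v)) as [H|H]; auto.
  destruct H as [H|H]; [|exfalso; apply (Hn v); [lra|auto]].
  destruct (ivt_pn g u v Hc Huv Hu H) as [z [Hz Hgz]]. exfalso; apply (Hn z); auto.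
Qed.

Lemma const_neg (g : R -> R) u v : (forall x, continuity_pt g x) -> u <= v ->
  (forall r, u <= r <= v -> g r <> 0) -> g u < 0 -> g v < 0.
Proof.
  intros Hc Huv Hn Hu.
  assert (0 < - g v); [|lra].
  apply (const_pos (fun x => - g x) u v); auto.
  - intro x. apply continuity_pt_opp, Hc.
  - intros r Hr H. apply (Hn r Hr). lra.
  - lra.
Qed.

Lemma interior_min (g : R -> R) u v r l : u < r < v ->
  (forall x, u <= x <= v -> g r <= g x) -> is_derive g r l -> l = 0.
Proof.
  intros Hr Hmin Hd. destruct (Rtotal_order l 0) as [Hl|[Hl|Hl]]; auto; exfalso.
  - destruct (loc_sign_neg g r l Hd Hl) as [d [Hd0 Hs]].
    set (h := Rmin d (v - r) / 2).
    assert (Hh : 0 < Rmin d (v - r)) by (apply Rmin_pos; lra).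
    assert (Rmin d (v - r) <= d) by apply Rmin_l. assert (Rmin d (v - r) <= v - r) by apply Rmin_r.
    destruct (Hs h) as [H1 H2]; [unfold h; lra|].
    assert (g r <= g (r + h)) by (apply Hmin; unfold h; lra). lra.
  - destruct (loc_sign g r l Hd Hl) as [d [Hd0 Hs]].
    assert (Hh : 0 < Rmin d (r - u)) by (apply Rmin_pos; lra).
    assert (Rmin d (r - u) <= d) by apply Rmin_l. assert (Rmin d (r - u) <= r - u) by apply Rmin_r.
    set (h := Rmin d (r - u) / 2).
    destruct (Hs h) as [H1 H2]; [unfold h; lra|].
    assert (g r <= g (r - h)) by (apply Hmin; unfold h; lra). lra.
Qed.

Lemma cv_zero_const (u : nat -> R) l : Un_cv u l -> (forall n, u n = 0) -> l = 0.
Proof.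
  intros H Hu. destruct (Req_dec l 0) as [|Hn]; auto. exfalso.
  destruct (H (Rabs l)) as [N HN]; [apply Rabs_pos_lt; auto|].
  specialize (HN N (le_n N)). unfold R_dist in HN. rewrite Hu, Rminus_0_l, Rabs_Ropp in HN. lra.
Qed.

Lemma cv_squeeze (u v : nat -> R) l : Un_cv u l -> (forall k, u k <= v k <= u (S k)) -> Un_cv v l.
Proof.
  intros H Hb eps He. destruct (H eps He) as [N HN]. exists N. intros n Hn.
  assert (H1 := HN n Hn). assert (H2 := HN (S n) ltac:(lia)). specialize (Hb n).
  unfold R_dist in *. apply Rabs_def2 in H1. apply Rabs_def2 in H2. apply Rabs_def1; lra.
Qed.


Section ODE.
Variables (c chi : R) (f : R -> R).
Hypothesis Hc : 0 < c.
Hypothesis Hchi : c ^ 2 < chi.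
Hypothesis Hd : forall x, ex_derive f x /\ ex_derive (Derive f) x.
Hypothesis Hode : forall x,
  (1 - x ^ 2) * Derive (Derive f) x - 2 * x * Derive f x + (chi - c ^ 2 * x ^ 2) * f x = 0.
Hypothesis Hnt : exists x, -1 < x < 1 /\ f x <> 0.

Lemma df x : is_derive f x (Derive f x).
Proof. apply Derive_correct, Hd. Qed.
Lemma dd x : is_derive (Derive f) x (Derive (Derive f) x).
Proof. apply Derive_correct, Hd. Qed.
Lemma cf x : continuity_pt f x.
Proof. apply exd_cont, Hd. Qed.
Lemma cd x : continuity_pt (Derive f) x.
Proof. apply exd_cont, Hd. Qed.

Ltac fixeta := change (fun x : R => f x) with f in *; change (fun x : R => Derive f x) with (Derive f) in *.

Lemma energy a b K x0 : a <= b -> 0 <= K ->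
  (forall x, a <= x <= b -> Rabs (Derive (Derive f) x) <= K * (Rabs (f x) + Rabs (Derive f x))) ->
  a <= x0 <= b -> f x0 = 0 -> Derive f x0 = 0 ->
  forall x, a <= x <= b -> f x = 0 /\ Derive f x = 0.
Proof.
  intros Hab HK Hb Hx0 Hf0 Hd0 x Hx.
  set (L := 1 + 3 * K).
  assert (Hkey : forall y, a <= y <= b ->
    Rabs (2 * f y * Derive f y + 2 * Derive f y * Derive (Derive f) y) <= L * (f y ^ 2 + Derive f y ^ 2)).
  { intros y Hy. specialize (Hb y Hy).
    eapply Rle_trans; [apply Rabs_triang|].
    rewrite !Rabs_mult. rewrite (Rabs_right 2) by lra.
    assert (HA := Rabs_pos (f y)). assert (HB := Rabs_pos (Derive f y)).
    assert (HC := Rabs_pos (Derive (Derive f) y)).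
    rewrite <- (pow2_abs (f y)), <- (pow2_abs (Derive f y)). unfold L.
    assert (Rabs (Derive f y) * Rabs (Derive (Derive f) y) <= Rabs (Derive f y) * (K * (Rabs (f y) + Rabs (Derive f y)))) by (apply Rmult_le_compat_l; lra).
    set (u := Rabs (f y)) in *. set (v := Rabs (Derive f y)) in *. set (w := Rabs (Derive (Derive f) y)) in *.
    assert (2 * u * v <= u ^ 2 + v ^ 2) by (generalize (pow2_ge_0 (u - v)); lra).
    assert (K * (2 * u * v + 2 * v ^ 2) <= K * (3 * (u ^ 2 + v ^ 2))).
    { apply Rmult_le_compat_l; [lra|]. generalize (pow2_ge_0 (u - v)) (pow2_ge_0 u); lra. }
    nra. }
  set (E := fun y => f y ^ 2 + Derive f y ^ 2).
  assert (HE0 : E x0 = 0) by (unfold E; rewrite Hf0, Hd0; ring).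
  assert (HEx : E x = 0).
  { destruct (Rle_lt_dec x0 x) as [Hle|Hlt].
    - assert (Hm := mono_le (fun y => - (E y * exp (- L * (y - x0))))
        (fun y => (L * (f y ^2 + Derive f y ^2) - (2 * f y * Derive f y + 2 * Derive f y * Derive (Derive f) y)) * exp (- L * (y - x0))) x0 x Hle).
      simpl in Hm. rewrite HE0 in Hm.
      assert (0 <= E x * exp (- L * (x - x0))) by (apply Rmult_le_pos; [unfold E; nra| left; apply exp_pos]).
      assert (0 <= - (E x * exp (- L * (x - x0)))).
      { replace 0 with (- (0 * exp (- L * (x0 - x0)))) by ring. apply Hm.
        - intros y Hy. unfold E. generalize (Hd y); intros [H1 H2]. auto_derive. { tauto. } fixeta. unfold Rminus. ring.
        - intros y Hy. apply Rmult_le_pos; [|left; apply exp_pos].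
          assert (Hk := Hkey y ltac:(lra)). apply Rabs_le_between in Hk. lra. }
      assert (E x * exp (- L * (x - x0)) = 0) by lra.
      apply Rmult_integral in H1. destruct H1; auto. exfalso; generalize (exp_pos (- L * (x - x0))); lra.
    - assert (Hm := mono_le (fun y => (E y * exp (L * (y - x0))))
        (fun y => (L * (f y ^2 + Derive f y ^2) + (2 * f y * Derive f y + 2 * Derive f y * Derive (Derive f) y)) * exp (L * (y - x0))) x x0 (Rlt_le _ _ Hlt)).
      simpl in Hm. rewrite HE0 in Hm.
      assert (0 <= E x * exp (L * (x - x0))) by (apply Rmult_le_pos; [unfold E; nra| left; apply exp_pos]).
      assert (E x * exp (L * (x - x0)) <= 0).
      { replace 0 with (0 * exp (L * (x0 - x0))) by ring. apply Hm.
        - intros y Hy. unfold E. generalize (Hd y); intros [H1 H2]. auto_derive. { tauto. } fixeta. unfold Rminus. ring.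
        - intros y Hy. apply Rmult_le_pos; [|left; apply exp_pos].
          assert (Hk := Hkey y ltac:(lra)). apply Rabs_le_between in Hk. lra. }
      assert (E x * exp (L * (x - x0)) = 0) by lra.
      apply Rmult_integral in H1. destruct H1; auto. exfalso; generalize (exp_pos (L * (x - x0))); lra. }
  unfold E in HEx. split; nra.
Qed.


Lemma bound_gen x m B : 0 < m -> m <= Rabs (1 - x ^ 2) -> Rabs x <= B ->
  Rabs (Derive (Derive f) x) <= (2 * B + Rabs chi + c ^ 2 * B ^ 2) / m * (Rabs (f x) + Rabs (Derive f x)).
Proof.
  intros Hm Hmx HB.
  assert (Heq : (1 - x ^ 2) * Derive (Derive f) x = 2 * x * Derive f x - (chi - c ^ 2 * x ^ 2) * f x)
    by (generalize (Hode x); lra).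
  assert (H1 : Rabs (1 - x ^ 2) * Rabs (Derive (Derive f) x) <=
     (2 * B + Rabs chi + c ^ 2 * B ^ 2) * (Rabs (f x) + Rabs (Derive f x))).
  { rewrite <- Rabs_mult, Heq.
    eapply Rle_trans; [apply Rabs_triang|]. rewrite Rabs_Ropp, !Rabs_mult.
    rewrite (Rabs_right 2) by lra.
    assert (Hx2 : Rabs (chi - c ^ 2 * x ^ 2) <= Rabs chi + c ^ 2 * B ^ 2).
    { unfold Rminus. eapply Rle_trans; [apply Rabs_triang|]. rewrite Rabs_Ropp, Rabs_mult, (Rabs_right (c^2)) by (apply Rle_ge, pow2_ge_0).
      rewrite <- RPow_abs. apply Rplus_le_compat_l. apply Rmult_le_compat_l; [apply pow2_ge_0|].
      apply pow_incr. split; [apply Rabs_pos| auto]. }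
    assert (HA := Rabs_pos (f x)). assert (HBB := Rabs_pos (Derive f x)). assert (Hx0 := Rabs_pos x).
    assert (Hc2 : 0 <= c ^ 2 * B ^ 2) by (apply Rmult_le_pos; apply pow2_ge_0).
    assert (Rabs x * Rabs (Derive f x) <= B * Rabs (Derive f x)) by (apply Rmult_le_compat_r; lra).
    assert (Rabs (chi - c ^ 2 * x ^ 2) * Rabs (f x) <= (Rabs chi + c ^ 2 * B ^ 2) * Rabs (f x)) by (apply Rmult_le_compat_r; lra).
    assert (HchiA := Rabs_pos chi). nra. }
  assert (HD := Rabs_pos (Derive (Derive f) x)).
  apply (Rmult_le_reg_r m); auto.
  replace ((2 * B + Rabs chi + c ^ 2 * B ^ 2) / m * (Rabs (f x) + Rabs (Derive f x)) * m) with
    ((2 * B + Rabs chi + c ^ 2 * B ^ 2) * (Rabs (f x) + Rabs (Derive f x))) by (field; lra).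
  eapply Rle_trans; [|apply H1]. rewrite Rmult_comm. apply Rmult_le_compat_r; lra.
Qed.

Lemma bound_right a b : 1 < a <= b -> exists K, 0 <= K /\
  forall x, a <= x <= b -> Rabs (Derive (Derive f) x) <= K * (Rabs (f x) + Rabs (Derive f x)).
Proof.
  intros Hab. exists ((2 * b + Rabs chi + c ^ 2 * b ^ 2) / (a ^ 2 - 1)). split.
  - apply Rmult_le_pos. { generalize (Rabs_pos chi) (pow2_ge_0 c) (pow2_ge_0 b); intros; nra. }
    left. apply Rinv_0_lt_compat. nra.
  - intros x Hx. apply bound_gen. { nra. } { rewrite Rabs_left1 by nra. nra. }
    rewrite Rabs_right; lra.
Qed.

Lemma bound_mid a b : -1 < a -> a <= b -> b < 1 -> exists K, 0 <= K /\
  forall x, a <= x <= b -> Rabs (Derive (Derive f) x) <= K * (Rabs (f x) + Rabs (Derive f x)).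
Proof.
  intros Ha Hab Hb. exists ((2 * 1 + Rabs chi + c ^ 2 * 1 ^ 2) / ((1 - b) * (1 + a))). split.
  - apply Rmult_le_pos. { generalize (Rabs_pos chi) (pow2_ge_0 c); intros; nra. }
    left. apply Rinv_0_lt_compat. nra.
  - intros x Hx. apply bound_gen. { nra. } { rewrite Rabs_right by nra. nra. }
    apply Rabs_le; lra.
Qed.


Lemma w_deriv s : is_derive (fun t => (t ^ 2 - 1) * Derive f t) s ((chi - c ^ 2 * s ^ 2) * f s).
Proof.
  generalize (Hd s); intros [H1 H2]. auto_derive. { tauto. } fixeta.
  generalize (Hode s). intros; lra.
Qed.

Lemma sing_left : f 1 = 0 -> Derive f 1 = 0 ->
  exists dl, 0 < dl < 1 /\ forall t, 1 - dl <= t <= 1 -> f t = 0 /\ Derive f t = 0.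
Proof.
  intros Hf1 Hd1.
  set (K := Rabs chi + c ^ 2).
  assert (HK : 0 <= K) by (unfold K; generalize (Rabs_pos chi) (pow2_ge_0 c); lra).
  set (dl := / (2 * K + 2)).
  assert (Hdl : 0 < dl <= 1 / 2).
  { unfold dl. split; [apply Rinv_0_lt_compat; lra|].
    apply (Rmult_le_reg_l (2 * K + 2)); [lra|]. rewrite Rinv_r by lra. lra. }
  assert (HKdl : K * dl <= 1 / 2).
  { unfold dl. apply (Rmult_le_reg_l (2 * K + 2)); [lra|].
    replace ((2 * K + 2) * (K * / (2 * K + 2))) with K by (field; lra). lra. }
  exists dl. split; [lra|].
  destruct (continuity_ab_maj (fun t => Rabs (Derive f t)) (1 - dl) 1) as [Mx [HM HMx]].
  { lra. }
  { intros t _. apply (continuity_pt_comp (Derive f) Rabs t); [apply cd| apply Rcontinuity_abs]. }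
  set (M := Rabs (Derive f Mx)) in *.
  assert (HM0 : 0 <= M) by apply Rabs_pos.
  assert (Hfb : forall s, 1 - dl <= s <= 1 -> Rabs (f s) <= M * (1 - s)).
  { intros s Hs. assert (H := mvt_bound f (Derive f) s 1 M ltac:(lra) (fun x _ => df x)).
    rewrite Hf1, Rminus_0_l, Rabs_Ropp in H. apply H. intros x Hx; apply HM; lra. }
  assert (Hhalf : forall t, 1 - dl <= t <= 1 -> Rabs (Derive f t) <= M / 2).
  { intros t Ht. destruct (Req_dec t 1) as [->|Hne].
    { rewrite Hd1, Rabs_R0. lra. }
    assert (Hw := mvt_bound (fun t => (t ^ 2 - 1) * Derive f t) (fun s => (chi - c ^ 2 * s ^ 2) * f s) t 1
       (K * (M * (1 - t))) ltac:(lra) (fun x _ => w_deriv x)).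
    cbv beta in Hw. rewrite Hd1 in Hw.
    assert (Hw2 : Rabs ((t ^ 2 - 1) * Derive f t) <= K * (M * (1 - t)) * (1 - t)).
    { replace ((t ^ 2 - 1) * Derive f t) with (- ((1 ^ 2 - 1) * 0 - (t ^ 2 - 1) * Derive f t)) by ring.
      rewrite Rabs_Ropp. apply Hw. intros x Hx. rewrite Rabs_mult. apply Rmult_le_compat.
      - apply Rabs_pos.
      - apply Rabs_pos.
      - unfold K. unfold Rminus. eapply Rle_trans; [apply Rabs_triang|]. rewrite Rabs_Ropp, Rabs_mult.
        rewrite (Rabs_right (c^2)) by (apply Rle_ge, pow2_ge_0). apply Rplus_le_compat_l.
        rewrite <- RPow_abs. rewrite Rabs_right by lra.
        assert (x ^ 2 <= 1) by nra. generalize (pow2_ge_0 c); nra.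
      - eapply Rle_trans; [apply Hfb; lra|]. apply Rmult_le_compat_l; lra. }
    rewrite Rabs_mult, (Rabs_left1 (t ^ 2 - 1)) in Hw2 by nra.
    assert (Hp : 0 < 1 - t) by lra.
    assert (Hc1 : (1 - t) * Rabs (Derive f t) <= (1 - t) * (K * M * (1 - t))).
    { assert (HA := Rabs_pos (Derive f t)).
      assert ((1 - t) * Rabs (Derive f t) <= - (t ^ 2 - 1) * Rabs (Derive f t)) by (apply Rmult_le_compat_r; nra).
      nra. }
    apply Rmult_le_reg_l in Hc1; auto.
    eapply Rle_trans; [apply Hc1|].
    assert (K * M * (1 - t) <= K * M * dl) by (apply Rmult_le_compat_l; [nra|lra]).
    nra. }
  assert (HM00 : M = 0).
  { assert (M <= M / 2) by (apply Hhalf; auto). lra. }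
  intros t Ht. split.
  - assert (H := Hfb t Ht). rewrite HM00 in H. rewrite Rmult_0_l in H.
    generalize (Rabs_pos (f t)); intros. apply Rabs_eq_0; lra.
  - assert (H := Hhalf t Ht). rewrite HM00 in H.
    generalize (Rabs_pos (Derive f t)); intros. apply Rabs_eq_0; lra.
Qed.


Lemma zero_mid x1 : -1 < x1 < 1 -> f x1 = 0 -> Derive f x1 = 0 -> False.
Proof.
  intros Hx1 Hf Hd1. destruct Hnt as [x [Hx Hfx]]. apply Hfx.
  destruct (bound_mid (Rmin x x1) (Rmax x x1)) as [K [HK Hb]].
  { apply Rmin_case; lra. } { apply Rle_trans with x; [apply Rmin_l|apply Rmax_l]. } { apply Rmax_case; lra. }
  apply (energy (Rmin x x1) (Rmax x x1) K x1); auto.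
  - apply Rle_trans with x; [apply Rmin_l|apply Rmax_l].
  - split; [apply Rmin_r|apply Rmax_r].
  - split; [apply Rmin_l|apply Rmax_l].
Qed.

Lemma no_double_one : f 1 = 0 -> Derive f 1 = 0 -> False.
Proof.
  intros H1 H2. destruct (sing_left H1 H2) as [dl [Hdl Hz]].
  destruct (Hz (1 - dl / 2)) as [Ha Hb]; [lra|].
  apply (zero_mid (1 - dl / 2)); auto. lra.
Qed.

Lemma no_double_right x0 : 1 < x0 -> f x0 = 0 -> Derive f x0 = 0 -> False.
Proof.
  intros Hx0 Hf Hd0.
  assert (Hall : forall x, 1 < x -> f x = 0 /\ Derive f x = 0).
  { intros x Hx.
    destruct (bound_right (Rmin x x0) (Rmax x x0)) as [K [HK Hb]].
    { split; [apply Rmin_case; lra|]. apply Rle_trans with x; [apply Rmin_l|apply Rmax_l]. }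
    apply (energy (Rmin x x0) (Rmax x x0) K x0); auto.
    - apply Rle_trans with x; [apply Rmin_l|apply Rmax_l].
    - split; [apply Rmin_r|apply Rmax_r].
    - split; [apply Rmin_l|apply Rmax_l]. }
  apply no_double_one.
  - apply cont_right0; [apply cf|]. intros y Hy; apply Hall; auto.
  - apply cont_right0; [apply cd|]. intros y Hy; apply Hall; auto.
Qed.

Lemma f1_nz : f 1 <> 0.
Proof.
  intros H. apply no_double_one; auto.
  generalize (Hode 1). rewrite H. intros. lra.
Qed.


Lemma a_facts : 1 < sqrt chi / c /\ c ^ 2 * (sqrt chi / c) ^ 2 = chi.
Proof.
  assert (Hc2 : 0 < c ^ 2) by (apply pow_lt; lra).
  assert (Hchi0 : 0 < chi) by lra.
  assert (Hs : sqrt chi * sqrt chi = chi) by (apply sqrt_sqrt; lra).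
  split.
  - apply (Rmult_lt_reg_r c); [lra|]. unfold Rdiv. rewrite Rmult_assoc, Rinv_l by lra.
    rewrite Rmult_1_l, Rmult_1_r.
    apply Rsqr_incrst_0; [unfold Rsqr; rewrite Hs; simpl in Hchi; lra| lra| apply sqrt_pos].
  - replace ((sqrt chi / c)^2) with (sqrt chi * sqrt chi / (c*c)) by (field; lra). rewrite Hs. field. lra.
Qed.

Lemma below_a x : 1 <= x <= sqrt chi / c -> c ^ 2 * x ^ 2 <= chi.
Proof.
  intros Hx. destruct a_facts as [Ha Hca]. rewrite <- Hca.
  apply Rmult_le_compat_l; [apply pow2_ge_0|]. apply pow_incr; lra.
Qed.

Lemma above_a x : sqrt chi / c < x -> chi < c ^ 2 * x ^ 2.
Proof.
  intros Hx. destruct a_facts as [Ha Hca]. rewrite <- Hca.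
  apply Rmult_lt_compat_l; [apply pow_lt; lra|]. nra.
Qed.

Lemma pos_init : 0 < f 1 ->
  (forall x, 1 <= x <= sqrt chi / c -> 0 < f x) /\
  (forall x, 1 < x <= sqrt chi / c -> 0 < Derive f x).
Proof.
  intros Hp. destruct a_facts as [Ha Hca].
  assert (HH : forall x, 1 <= x <= sqrt chi / c -> 0 <= f x * ((x ^ 2 - 1) * Derive f x)).
  { intros x Hx.
    replace 0 with (f 1 * ((1 ^ 2 - 1) * Derive f 1)) by ring.
    apply (mono_le (fun t => f t * ((t ^ 2 - 1) * Derive f t))
      (fun t => Derive f t * ((t ^ 2 - 1) * Derive f t) + f t * ((chi - c ^ 2 * t ^ 2) * f t))); [lra| |].
    - intros t _. apply (is_derive_mult f (fun t => (t ^ 2 - 1) * Derive f t)); [apply df|apply w_deriv|].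
      intros; apply Rmult_comm.
    - intros t Ht. assert (c ^ 2 * t ^ 2 <= chi) by (apply below_a; lra).
      assert (0 <= t ^ 2 - 1) by nra. generalize (pow2_ge_0 (Derive f t)) (pow2_ge_0 (f t)); nra. }
  assert (Hfd : forall x, 1 <= x <= sqrt chi / c -> 0 <= f x * Derive f x).
  { intros x Hx. destruct (Req_dec x 1) as [->|Hne].
    - generalize (Hode 1); intros H. assert (Derive f 1 = (chi - c ^ 2) * f 1 / 2) by (field_simplify in H; lra).
      rewrite H0. assert (0 <= (chi - c^2)) by lra. generalize (pow2_ge_0 (f 1)); intros.
      assert (0 <= (chi - c^2) * (f 1 * f 1)) by (apply Rmult_le_pos; nra). nra.
    - specialize (HH x Hx). assert (0 < x ^ 2 - 1) by nra.
      assert (0 <= (x ^ 2 - 1) * (f x * Derive f x)) by (replace ((x^2-1)*(f x * Derive f x)) with (f x * ((x^2-1) * Derive f x)) by ring; exact HH).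
      destruct (Rle_lt_dec 0 (f x * Derive f x)); auto. nra. }
  assert (Hf : forall x, 1 <= x <= sqrt chi / c -> 0 < f x).
  { intros x Hx. apply (const_pos f 1 x); [apply cf| lra| |auto].
    intros r Hr Hr0.
    assert (f 1 ^ 2 <= f r ^ 2).
    { apply (mono_le (fun t => f t ^ 2) (fun t => 2 * f t * Derive f t)); [lra| |].
      - intros t _. generalize (Hd t); intros [H1 H2]. auto_derive; auto. fixeta. ring.
      - intros t Ht. assert (0 <= f t * Derive f t) by (apply Hfd; lra). lra. }
    rewrite Hr0 in H. generalize (pow_lt (f 1) 2 Hp). simpl in H. lra. }
  split; auto.
  intros x Hx.
  assert (Hw : 0 < (x ^ 2 - 1) * Derive f x).
  { replace 0 with ((1 ^ 2 - 1) * Derive f 1) by ring.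
    apply Rlt_le_trans with ((((1 + x) / 2) ^ 2 - 1) * Derive f ((1 + x) / 2)).
    - apply (mono_lt (fun t => (t ^ 2 - 1) * Derive f t) (fun t => (chi - c ^ 2 * t ^ 2) * f t)); [lra| intros; apply w_deriv|].
      intros t Ht. apply Rmult_lt_0_compat; [|apply Hf; lra].
      assert (c ^ 2 * t ^ 2 < c ^ 2 * (sqrt chi / c) ^ 2); [|lra].
      apply Rmult_lt_compat_l; [apply pow_lt; lra|]. nra.
    - apply (mono_le (fun t => (t ^ 2 - 1) * Derive f t) (fun t => (chi - c ^ 2 * t ^ 2) * f t)); [lra| intros; apply w_deriv|].
      intros t Ht. apply Rmult_le_pos; [|left; apply Hf; lra].
      assert (c ^ 2 * t ^ 2 <= chi) by (apply below_a; lra). lra. }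
  assert (0 < x ^ 2 - 1) by nra. nra.
Qed.

Lemma W_deriv (m b : R) x : 1 < x ->
  is_derive (fun x => sqrt (x^2-1) * Derive f x * sin (m*(x-b)) + f x * (x * sin (m*(x-b)) / sqrt (x^2-1) - m * sqrt (x^2-1) * cos (m*(x-b)))) x
   (f x * sin (m*(x-b)) / sqrt (x^2-1) * (chi - c^2*x^2 + m^2*(x^2-1) - 1/(x^2-1))).
Proof.
  intros Hx. destruct (Hd x) as [H1 H2]. assert (Hode0 := Hode x).
  assert (Hp : 0 < x^2 - 1) by nra.
  auto_derive.
  { repeat split; auto; try nra. apply Rgt_not_eq, sqrt_lt_R0; nra. }
  change (fun x : R => f x) with f. change (fun x : R => Derive f x) with (Derive f).
  assert (Hs : sqrt (x^2-1) * sqrt (x^2-1) = x^2-1) by (apply sqrt_sqrt; lra).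
  assert (Hsp : 0 < sqrt (x^2-1)) by (apply sqrt_lt_R0; lra).
  assert (Hd2 : Derive (Derive f) x = (2 * x * Derive f x - (chi - c ^ 2 * x ^ 2) * f x) / (1 - x^2)) .
  { assert (Hne : 1 - x^2 <> 0) by nra. apply (Rmult_eq_reg_l (1 - x^2)); auto.
    replace ((1 - x ^ 2) * ((2 * x * Derive f x - (chi - c ^ 2 * x ^ 2) * f x) / (1 - x ^ 2)))
      with (2 * x * Derive f x - (chi - c ^ 2 * x ^ 2) * f x) by (field; auto). lra. }
  rewrite Hd2.
  replace (x * (x * 1) + - (1)) with (x^2-1) by ring.
  replace (chi - c^2*x^2 + m^2*(x^2-1) - 1/(x^2-1)) with
    (chi - c^2*x^2 + m^2*(sqrt (x^2-1) * sqrt (x^2-1)) + (sqrt (x^2-1) * sqrt (x^2-1) - x*x)/(sqrt (x^2-1) * sqrt (x^2-1))).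
  2: { rewrite Hs. field. lra. }
  replace (1 - x^2) with (- (sqrt (x^2-1) * sqrt (x^2-1))) by (rewrite Hs; ring).
  set (r := sqrt (x^2-1)) in *.
  unfold Rminus. field. lra.
Qed.

Lemma osc T : exists z, T < z /\ f z = 0.
Proof.
  destruct a_facts as [Ha Hca]. set (a := sqrt chi / c) in *.
  set (m := c / 2). set (b := Rmax T (2 * a) + 1). set (e := b + PI / m).
  assert (Hm : 0 < m) by (unfold m; lra).
  assert (HbT : T < b) by (unfold b; generalize (Rmax_l T (2 * a)); lra).
  assert (Hb2 : 2 * a < b) by (unfold b; generalize (Rmax_r T (2 * a)); lra).
  assert (Hbe : b < e) by (unfold e; generalize (PI_RGT_0); intros; assert (0 < PI / m) by (apply Rdiv_lt_0_compat; lra); lra).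
  destruct (Classical_Prop.classic (exists z, b <= z <= e /\ f z = 0)) as [[z [Hz Hfz]]|Hno].
  { exists z; split; auto; lra. }
  assert (Hnz : forall z, b <= z <= e -> f z <> 0) by (intros z Hz H; apply Hno; exists z; auto).
  exfalso.
  set (W := fun x => sqrt (x^2-1) * Derive f x * sin (m*(x-b)) + f x * (x * sin (m*(x-b)) / sqrt (x^2-1) - m * sqrt (x^2-1) * cos (m*(x-b)))).
  set (Bx := fun x => chi - c^2*x^2 + m^2*(x^2-1) - 1/(x^2-1)).
  set (D := fun x => f x * sin (m*(x-b)) / sqrt (x^2-1) * Bx x).
  assert (HWd : forall x, b <= x <= e -> is_derive W x (D x)).
  { intros x Hx. apply W_deriv. lra. }
  assert (HB : forall x, b <= x -> Bx x < 0).
  { intros x Hx. unfold Bx, m. assert (H4 : 0 < x^2 - 1) by nra.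
    assert (0 < 1 / (x^2-1)) by (apply Rdiv_lt_0_compat; lra).
    assert (Hc2 : 0 < c ^ 2) by (apply pow_lt; lra).
    assert (4 * a ^ 2 < x ^ 2) by nra.
    assert (c ^ 2 * (4 * a ^ 2) < c ^ 2 * x ^ 2) by (apply Rmult_lt_compat_l; auto).
    nra. }
  assert (Hsin : forall x, b <= x <= e -> 0 <= sin (m * (x - b))).
  { intros x Hx. apply sin_ge_0; [nra|]. 
    assert (m * (x - b) <= m * (e - b)) by (apply Rmult_le_compat_l; lra).
    replace (m * (e - b)) with PI in H by (unfold e; field; lra). lra. }
  assert (Hr : forall x, b <= x -> 0 < sqrt (x^2-1)) by (intros x Hx; apply sqrt_lt_R0; nra).
  assert (HWb : W b = - m * sqrt (b^2-1) * f b).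
  { unfold W. rewrite Rminus_eq_0, Rmult_0_r, sin_0, cos_0. field. apply Rgt_not_eq, Hr; lra. }
  assert (HWe : W e = m * sqrt (e^2-1) * f e).
  { unfold W. replace (m * (e - b)) with PI by (unfold e; field; lra). rewrite sin_PI, cos_PI.
    field. apply Rgt_not_eq, Hr; lra. }
  destruct (Rlt_le_dec 0 (f b)) as [Hfb|Hfb].
  - assert (Hpos : forall x, b <= x <= e -> 0 < f x).
    { intros x Hx. apply (const_pos f b x); [apply cf| lra| |auto]. intros r Hr0; apply Hnz; lra. }
    assert (Hle : - W b <= - W e).
    { apply (mono_le (fun x => - W x) (fun x => - D x)); [lra| |].
      - intros x Hx. apply (is_derive_opp W). apply HWd; auto.
      - intros x Hx. unfold D. assert (HBx := HB x ltac:(lra)). assert (Hs := Hsin x Hx).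
        assert (Hf := Hpos x Hx). assert (Hrx := Hr x ltac:(lra)).
        assert (0 <= f x * sin (m * (x - b)) / sqrt (x ^ 2 - 1)).
        { apply Rmult_le_pos; [apply Rmult_le_pos; lra| left; apply Rinv_0_lt_compat; auto]. }
        nra. }
    rewrite HWb, HWe in Hle. assert (Hfe := Hpos e ltac:(lra)).
    assert (Hrb := Hr b ltac:(lra)). assert (Hre := Hr e ltac:(lra)).
    assert (0 < m * sqrt (b^2-1) * f b) by (apply Rmult_lt_0_compat; [apply Rmult_lt_0_compat|]; auto).
    assert (0 < m * sqrt (e^2-1) * f e) by (apply Rmult_lt_0_compat; [apply Rmult_lt_0_compat|]; auto).
    lra.
  - assert (Hfb' : f b < 0) by (destruct Hfb; auto; exfalso; apply (Hnz b); [lra|auto]).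
    assert (Hneg : forall x, b <= x <= e -> f x < 0).
    { intros x Hx. apply (const_neg f b x); [apply cf| lra| |auto]. intros r Hr0; apply Hnz; lra. }
    assert (Hle : W b <= W e).
    { apply (mono_le W D); [lra| |].
      - intros x Hx. apply HWd; auto.
      - intros x Hx. unfold D. assert (HBx := HB x ltac:(lra)). assert (Hs := Hsin x Hx).
        assert (Hf := Hneg x Hx). assert (Hrx := Hr x ltac:(lra)).
        assert (0 <= (- f x) * sin (m * (x - b)) / sqrt (x ^ 2 - 1)).
        { apply Rmult_le_pos; [apply Rmult_le_pos; lra| left; apply Rinv_0_lt_compat; auto]. }
        unfold Rdiv in *. nra. }
    rewrite HWb, HWe in Hle. assert (Hfe := Hneg e ltac:(lra)).
    assert (Hrb := Hr b ltac:(lra)). assert (Hre := Hr e ltac:(lra)).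
    assert (0 < m * sqrt (b^2-1) * - f b) by (apply Rmult_lt_0_compat; [apply Rmult_lt_0_compat|]; lra).
    assert (0 < m * sqrt (e^2-1) * - f e) by (apply Rmult_lt_0_compat; [apply Rmult_lt_0_compat|]; lra).
    lra.
Qed.

End ODE.


Definition good (c chi : R) (f : R -> R) : Prop :=
  0 < c /\ c ^ 2 < chi /\ (forall x, ex_derive f x /\ ex_derive (Derive f) x) /\
  (forall x, (1 - x ^ 2) * Derive (Derive f) x - 2 * x * Derive f x + (chi - c ^ 2 * x ^ 2) * f x = 0) /\
  (exists x, -1 < x < 1 /\ f x <> 0).

Lemma D1_opp (f : R -> R) x : Derive (fun t => - f t) x = - Derive f x.
Proof. apply Derive_opp. Qed.

Lemma D2_opp (f : R -> R) x : Derive (Derive (fun t => - f t)) x = - Derive (Derive f) x.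
Proof. rewrite (Derive_ext (Derive (fun t => - f t)) (fun t => - Derive f t)) by apply D1_opp. apply Derive_opp. Qed.

Lemma good_opp c chi f : good c chi f -> good c chi (fun t => - f t).
Proof.
  intros [Hc [Hchi [Hd [Hode [x [Hx Hfx]]]]]].
  split; auto. split; auto. split; [|split].
  - intros y. destruct (Hd y) as [H1 H2]. split.
    + exact (ex_derive_opp (K:=R_AbsRing) (V:=R_NormedModule) f y H1).
    + apply (ex_derive_ext (fun t => - Derive f t)); [intros t; symmetry; apply D1_opp|].
      exact (ex_derive_opp (K:=R_AbsRing) (V:=R_NormedModule) (Derive f) y H2).
  - intros y. rewrite D1_opp, D2_opp. generalize (Hode y). lra.
  - exists x; split; auto. lra.
Qed.

Section L2.
Variables (c chi : R) (f : R -> R).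
Hypothesis Hg : good c chi f.
Let Hc : 0 < c. Proof. apply Hg. Qed.
Let Hchi : c ^ 2 < chi. Proof. apply Hg. Qed.
Let Hd : forall x, ex_derive f x /\ ex_derive (Derive f) x. Proof. apply Hg. Qed.
Let Hode : forall x, (1 - x ^ 2) * Derive (Derive f) x - 2 * x * Derive f x + (chi - c ^ 2 * x ^ 2) * f x = 0.
Proof. apply Hg. Qed.
Let Hnt : exists x, -1 < x < 1 /\ f x <> 0. Proof. apply Hg. Qed.

Lemma locmax y : sqrt chi / c < y -> Derive f y = 0 -> 0 < f y ->
  exists d, 0 < d /\ forall h, 0 < h < d -> f (y + h) < f y /\ f (y - h) < f y.
Proof.
  intros Hy Hd1 Hf.
  assert (Hca := above_a c chi Hc Hchi y Hy).
  destruct (a_facts c chi Hc Hchi) as [Ha _].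
  assert (Hd2 : Derive (Derive f) y < 0).
  { generalize (Hode y). rewrite Hd1. intros H.
    assert ((1 - y ^ 2) * Derive (Derive f) y = - (chi - c ^ 2 * y ^ 2) * f y) by lra.
    assert (0 < - (chi - c ^ 2 * y ^ 2) * f y) by (apply Rmult_lt_0_compat; lra).
    assert (1 - y ^ 2 < 0) by nra. nra. }
  destruct (loc_sign_neg (Derive f) y _ (dd f Hd y) Hd2) as [d [Hd0 Hs]].
  rewrite Hd1 in Hs.
  exists d; split; auto. intros h Hh. split.
  - assert (- f y <= - f (y + h / 2)).
    { apply (mono_le (fun t => - f t) (fun t => - Derive f t)); [lra| |].
      - intros t _. apply (is_derive_opp f). apply (df f Hd).
      - intros t Ht. destruct (Req_dec t y) as [->|Hne]; [lra|].
        replace t with (y + (t - y)) by ring. destruct (Hs (t - y)); lra. }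
    assert (- f (y + h / 2) < - f (y + h)).
    { apply (mono_lt (fun t => - f t) (fun t => - Derive f t)); [lra| |].
      - intros t _. apply (is_derive_opp f). apply (df f Hd).
      - intros t Ht. replace t with (y + (t - y)) by ring. destruct (Hs (t - y)); lra. }
    lra.
  - assert (f (y - h) < f (y - h / 2)).
    { apply (mono_lt f (Derive f)); [lra| intros; apply (df f Hd)|].
      intros t Ht. replace t with (y - (y - t)) by ring. destruct (Hs (y - t)); lra. }
    assert (f (y - h / 2) <= f y).
    { apply (mono_le f (Derive f)); [lra| intros; apply (df f Hd)|].
      intros t Ht. destruct (Req_dec t y) as [->|Hne]; [lra|].
      replace t with (y - (y - t)) by ring. destruct (Hs (y - t)); lra. }
    lra.
Qed.

Lemma CZ_pos y x : sqrt chi / c < y -> Derive f y = 0 -> y < x ->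
  (forall r, y <= r < x -> 0 < f r) -> forall p, y < p < x -> Derive f p <> 0.
Proof.
  intros Hy Hd1 Hyx Hpos p Hp Hdp.
  destruct (continuity_ab_min f y p) as [r [Hmin Hr]]; [lra| intros; apply (cf f Hd)|].
  destruct (Req_dec r y) as [->|Hry].
  { destruct (locmax y Hy Hd1 (Hpos y ltac:(lra))) as [d [Hd0 Hl]].
    set (h := Rmin d (p - y) / 2).
    assert (0 < Rmin d (p - y)) by (apply Rmin_pos; lra).
    assert (Rmin d (p - y) <= d) by apply Rmin_l. assert (Rmin d (p - y) <= p - y) by apply Rmin_r.
    destruct (Hl h) as [Hq _]; [unfold h; lra|].
    assert (f y <= f (y + h)) by (apply Hmin; unfold h; lra). lra. }
  destruct (Req_dec r p) as [->|Hrp].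
  { destruct (locmax p ltac:(lra) Hdp (Hpos p ltac:(lra))) as [d [Hd0 Hl]].
    set (h := Rmin d (p - y) / 2).
    assert (0 < Rmin d (p - y)) by (apply Rmin_pos; lra).
    assert (Rmin d (p - y) <= d) by apply Rmin_l. assert (Rmin d (p - y) <= p - y) by apply Rmin_r.
    destruct (Hl h) as [_ Hq]; [unfold h; lra|].
    assert (f p <= f (p - h)) by (apply Hmin; unfold h; lra). lra. }
  assert (Hdr : Derive f r = 0).
  { apply (interior_min f y p r); [lra| auto| apply (df f Hd)]. }
  destruct (locmax r ltac:(lra) Hdr (Hpos r ltac:(lra))) as [d [Hd0 Hl]].
  set (h := Rmin d (p - r) / 2).
  assert (0 < Rmin d (p - r)) by (apply Rmin_pos; lra).
  assert (Rmin d (p - r) <= d) by apply Rmin_l. assert (Rmin d (p - r) <= p - r) by apply Rmin_r.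
  destruct (Hl h) as [Hq _]; [unfold h; lra|].
  assert (f r <= f (r + h)) by (apply Hmin; unfold h; lra). lra.
Qed.


Lemma g_pos_init : 0 < f 1 ->
  (forall x, 1 <= x <= sqrt chi / c -> 0 < f x) /\
  (forall x, 1 < x <= sqrt chi / c -> 0 < Derive f x).
Proof. apply (pos_init c chi f); auto. Qed.
Lemma g_no_double_right x0 : 1 < x0 -> f x0 = 0 -> Derive f x0 = 0 -> False.
Proof. apply (no_double_right c chi f); auto. Qed.
Lemma g_f1_nz : f 1 <> 0.
Proof. apply (f1_nz c chi f); auto. Qed.
Lemma g_osc T : exists z, T < z /\ f z = 0.
Proof. apply (osc c chi f); auto. Qed.
Lemma g_df x : is_derive f x (Derive f x).
Proof. apply (df f); auto. Qed.
Lemma g_dd x : is_derive (Derive f) x (Derive (Derive f) x).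
Proof. apply (dd f); auto. Qed.
Lemma g_cf x : continuity_pt f x.
Proof. apply (cf f); auto. Qed.
Lemma g_cd x : continuity_pt (Derive f) x.
Proof. apply (cd f); auto. Qed.
Lemma g_a : 1 < sqrt chi / c.
Proof. apply (a_facts c chi); auto. Qed.
Lemma g_above y : sqrt chi / c < y -> chi < c ^ 2 * y ^ 2.
Proof. apply (above_a c chi); auto. Qed.
Lemma g_ode x : (1 - x ^ 2) * Derive (Derive f) x - 2 * x * Derive f x + (chi - c ^ 2 * x ^ 2) * f x = 0.
Proof. apply Hode. Qed.

End L2.


Section L3.
Variables (c chi : R) (f : R -> R).
Hypothesis Hg : good c chi f.
Let Hg' : good c chi (fun t => - f t). Proof. apply good_opp; auto. Qed.

Lemma init_sign x : 1 < x <= sqrt chi / c ->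
  (0 < f 1 -> 0 < f x /\ 0 < Derive f x) /\ (f 1 < 0 -> f x < 0 /\ Derive f x < 0).
Proof.
  intros Hx. split.
  - intros Hp. destruct (g_pos_init c chi f Hg Hp) as [H1 H2]. split; [apply H1; lra| apply H2; lra].
  - intros Hn. destruct (g_pos_init c chi _ Hg') as [H1 H2]; [lra|].
    specialize (H1 x ltac:(lra)). specialize (H2 x Hx). rewrite D1_opp in H2. lra.
Qed.

Lemma init_nz x : 1 < x <= sqrt chi / c -> f x <> 0 /\ Derive f x <> 0.
Proof.
  intros Hx. destruct (init_sign x Hx) as [H1 H2].
  assert (Hf1 := g_f1_nz c chi f Hg).
  destruct (Rlt_le_dec 0 (f 1)) as [Hp|Hn].
  - destruct (H1 Hp); split; lra.
  - destruct (H2 ltac:(lra)); split; lra.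
Qed.

Lemma crit_gt_a y : 1 < y -> Derive f y = 0 -> sqrt chi / c < y.
Proof.
  intros Hy Hd. destruct (Rlt_le_dec (sqrt chi / c) y) as [H|H]; auto.
  exfalso. destruct (init_nz y ltac:(lra)); auto.
Qed.

Lemma zero_gt_a y : 1 < y -> f y = 0 -> sqrt chi / c < y.
Proof.
  intros Hy Hd. destruct (Rlt_le_dec (sqrt chi / c) y) as [H|H]; auto.
  exfalso. destruct (init_nz y ltac:(lra)); auto.
Qed.

Lemma CZ y x : sqrt chi / c < y -> Derive f y = 0 -> y < x ->
  (forall r, y < r < x -> f r <> 0) -> forall p, y < p < x -> Derive f p <> 0.
Proof.
  intros Hy Hd1 Hyx Hnz.
  assert (Ha := g_a c chi f Hg).
  assert (Hfy : f y <> 0) by (intro H; apply (g_no_double_right c chi f Hg y); auto; lra).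
  assert (Hnz' : forall r, y <= r < x -> f r <> 0).
  { intros r Hr. destruct (Req_dec r y) as [->|Hne]; auto. apply Hnz; lra. }
  destruct (Rlt_le_dec 0 (f y)) as [Hp|Hn].
  - apply (CZ_pos c chi f Hg y x); auto.
    intros r Hr. apply (const_pos f y r); [apply (g_cf c chi f Hg)| lra| |auto].
    intros s Hs; apply Hnz'; lra.
  - intros p Hp Hdp. apply (CZ_pos c chi _ Hg' y x Hy) with p; auto.
    + rewrite D1_opp, Hd1; ring.
    + intros r Hr. assert (f r < 0); [|lra].
      apply (const_neg f y r); [apply (g_cf c chi f Hg)| lra| |lra].
      intros s Hs; apply Hnz'; lra.
    + rewrite D1_opp, Hdp; ring.
Qed.

Lemma MONO t r : t < r -> (forall s, t <= s <= r -> Derive f s <> 0) ->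
  (0 < Derive f t -> f t < f r) /\ (Derive f t < 0 -> f r < f t).
Proof.
  intros Htr Hn. split.
  - intros Hp. apply (mono_lt f (Derive f)); [lra| intros; apply (g_df c chi f Hg)|].
    intros x Hx. apply (const_pos (Derive f) t x); [apply (g_cd c chi f Hg)| lra| |auto].
    intros s Hs; apply Hn; lra.
  - intros Hp. assert (- f t < - f r); [|lra].
    apply (mono_lt (fun s => - f s) (fun s => - Derive f s)); [lra| intros; apply (is_derive_opp f), (g_df c chi f Hg)|].
    intros x Hx. assert (Derive f x < 0); [|lra].
    apply (const_neg (Derive f) t x); [apply (g_cd c chi f Hg)| lra| |auto].
    intros s Hs; apply Hn; lra.
Qed.

Lemma NZ t : sqrt chi / c <= t -> exists s, t < s /\ f s = 0 /\ forall r, t < r < s -> f r <> 0.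
Proof.
  intros Ht. assert (Ha := g_a c chi f Hg).
  destruct (g_osc c chi f Hg t) as [p [Hp Hfp]].
  destruct (first_zero f t p (g_cf c chi f Hg) Hp Hfp) as [s [Hs [Hfs Hr]]].
  - destruct (Req_dec (f t) 0) as [H0|Hn].
    + assert (Hdt : Derive f t <> 0) by (intro H; apply (g_no_double_right c chi f Hg t); auto; lra).
      destruct (Rlt_le_dec 0 (Derive f t)) as [Hpos|Hneg].
      * destruct (loc_sign f t _ (g_df c chi f Hg t) Hpos) as [d [Hd Hs]].
        exists d; split; auto. intros r Hr. replace r with (t + (r - t)) by ring.
        destruct (Hs (r - t)); lra.
      * destruct (loc_sign_neg f t _ (g_df c chi f Hg t) ltac:(lra)) as [d [Hd Hs]].
        exists d; split; auto. intros r Hr. replace r with (t + (r - t)) by ring.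
        destruct (Hs (r - t)); lra.
    + destruct (cont_nz f t (g_cf c chi f Hg t) Hn) as [d [Hd Hs]].
      exists d; split; auto. intros r Hr. apply Hs. rewrite Rabs_right; lra.
  - exists s; split; [lra| split; auto].
Qed.

Lemma crit_exists t : exists p, t < p /\ Derive f p = 0.
Proof.
  destruct (g_osc c chi f Hg t) as [z1 [H1 Hf1]].
  destruct (g_osc c chi f Hg z1) as [z2 [H2 Hf2]].
  destruct (MVT_gen f z1 z2 (Derive f)) as [xi [Hxi Heq]].
  - intros; apply (g_df c chi f Hg).
  - intros; apply (g_cf c chi f Hg).
  - rewrite Rmin_left in Hxi by lra. rewrite Rmax_right in Hxi by lra.
    rewrite Hf1, Hf2 in Heq. exists xi. split; [lra|].
    assert (Derive f xi * (z2 - z1) = 0) by lra.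
    apply Rmult_integral in H. destruct H; auto. lra.
Qed.

Lemma NC t : sqrt chi / c <= t -> exists s, t < s /\ Derive f s = 0 /\ forall r, t < r < s -> Derive f r <> 0.
Proof.
  intros Ht. assert (Ha := g_a c chi f Hg).
  destruct (crit_exists t) as [p [Hp Hfp]].
  destruct (first_zero (Derive f) t p (g_cd c chi f Hg) Hp Hfp) as [s [Hs [Hfs Hr]]].
  - destruct (Req_dec (Derive f t) 0) as [H0|Hn].
    + assert (Hta : sqrt chi / c < t) by (apply crit_gt_a; auto; lra).
      assert (Hft : f t <> 0) by (intro H; apply (g_no_double_right c chi f Hg t); auto; lra).
      assert (Hdd : Derive (Derive f) t <> 0).
      { intro H. generalize (g_ode c chi f Hg t). rewrite H, H0. intros Hq.
        assert ((chi - c ^ 2 * t ^ 2) * f t = 0) by lra.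
        apply Rmult_integral in H1. destruct H1 as [H1|H1]; auto.
        generalize (g_above c chi f Hg t Hta). lra. }
      destruct (Rlt_le_dec 0 (Derive (Derive f) t)) as [Hpos|Hneg].
      * destruct (loc_sign (Derive f) t _ (g_dd c chi f Hg t) Hpos) as [d [Hd Hs]].
        exists d; split; auto. intros r Hr. replace r with (t + (r - t)) by ring.
        destruct (Hs (r - t)); lra.
      * destruct (loc_sign_neg (Derive f) t _ (g_dd c chi f Hg t) ltac:(lra)) as [d [Hd Hs]].
        exists d; split; auto. intros r Hr. replace r with (t + (r - t)) by ring.
        destruct (Hs (r - t)); lra.
    + destruct (cont_nz (Derive f) t (g_cd c chi f Hg t) Hn) as [d [Hd Hs]].
      exists d; split; auto. intros r Hr. apply Hs. rewrite Rabs_right; lra.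
  - exists s; split; [lra| split; auto].
Qed.

End L3.


Fixpoint seqy (nz nc : R -> R) (a : R) (k : nat) : R :=
  match k with O => nc a | S k => nc (nz (seqy nz nc a k)) end.

Lemma main_f c chi f : good c chi f ->
  exists xs ys : nat -> R,
    (forall x, 1 < x -> (f x = 0 <-> exists k, x = xs k)) /\
    (forall k, 1 < xs k) /\
    (forall y, 1 < y -> (Derive f y = 0 <-> exists k, y = ys k)) /\
    (forall k, 1 < ys k) /\
    sqrt chi / c < ys 0%nat /\
    (forall k, ys k < xs k /\ xs k < ys (S k)).
Proof.
  intros Hg. set (a := sqrt chi / c).
  assert (Ha : 1 < a) by apply (g_a c chi f Hg).
  assert (NZ' : forall t, exists s, a <= t -> t < s /\ f s = 0 /\ forall r, t < r < s -> f r <> 0).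
  { intros t. destruct (Rle_dec a t) as [H|H].
    - destruct (NZ c chi f Hg t H) as [s Hs]. exists s; auto.
    - exists 0; intros; contradiction. }
  assert (NC' : forall t, exists s, a <= t -> t < s /\ Derive f s = 0 /\ forall r, t < r < s -> Derive f r <> 0).
  { intros t. destruct (Rle_dec a t) as [H|H].
    - destruct (NC c chi f Hg t H) as [s Hs]. exists s; auto.
    - exists 0; intros; contradiction. }
  set (nz := fun t => proj1_sig (constructive_indefinite_description _ (NZ' t))).
  set (nc := fun t => proj1_sig (constructive_indefinite_description _ (NC' t))).
  assert (Hnz : forall t, a <= t -> t < nz t /\ f (nz t) = 0 /\ forall r, t < r < nz t -> f r <> 0).
  { intros t. unfold nz. destruct (constructive_indefinite_description _ (NZ' t)); simpl; auto. }
  assert (Hnc : forall t, a <= t -> t < nc t /\ Derive f (nc t) = 0 /\ forall r, t < r < nc t -> Derive f r <> 0).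
  { intros t. unfold nc. destruct (constructive_indefinite_description _ (NC' t)); simpl; auto. }
  set (ys := seqy nz nc a). set (xs := fun k => nz (ys k)).
  assert (Hya : forall k, a < ys k).
  { induction k as [|k IH]; simpl.
    - apply Hnc; lra.
    - unfold ys in *. simpl. destruct (Hnz (seqy nz nc a k)) as [H1 _]; [lra|].
      destruct (Hnc (nz (seqy nz nc a k))) as [H2 _]; lra. }
  assert (Hyx : forall k, ys k < xs k /\ xs k < ys (S k)).
  { intros k. unfold xs. destruct (Hnz (ys k)) as [H1 _]; [left; auto|]. split; auto.
    change (ys (S k)) with (nc (nz (ys k))). apply Hnc. specialize (Hya k); lra. }
  assert (Hdy : forall k, Derive f (ys k) = 0).
  { intros [|k]. { apply Hnc; lra. } change (ys (S k)) with (nc (xs k)). apply Hnc.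
    destruct (Hyx k); specialize (Hya k); lra. }
  assert (Hfx : forall k, f (xs k) = 0) by (intros k; apply Hnz; left; apply Hya).
  assert (Hfy : forall k, f (ys k) <> 0).
  { intros k H. apply (g_no_double_right c chi f Hg (ys k)); auto. specialize (Hya k); lra. }
  assert (Hdx : forall k, Derive f (xs k) <> 0).
  { intros k H. apply (g_no_double_right c chi f Hg (xs k)); auto. specialize (Hya k); destruct (Hyx k); lra. }
  assert (G0 : forall r, 1 < r < ys 0%nat -> f r <> 0 /\ Derive f r <> 0).
  { intros r Hr. destruct (Rle_dec r a) as [Hle|Hgt].
    - apply (init_nz c chi f Hg). unfold a in *; lra.
    - assert (Hdr : forall s, a < s < ys 0%nat -> Derive f s <> 0).
      { intros s Hs. apply (Hnc a); [lra|]. exact Hs. }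
      split; [|apply Hdr; lra].
      assert (Hall : forall s, a <= s <= r -> Derive f s <> 0).
      { intros s Hs. destruct (Req_dec s a) as [->|Hne].
        - apply (init_nz c chi f Hg). split; [exact Ha| apply Rle_refl].
        - apply Hdr; lra. }
      destruct (MONO c chi f Hg a r ltac:(lra) Hall) as [M1 M2].
      assert (Hf1 := g_f1_nz c chi f Hg).
      destruct (init_sign c chi f Hg a (conj Ha (Rle_refl _))) as [I1 I2].
      destruct (Rlt_le_dec 0 (f 1)) as [Hp|Hn].
      + destruct (I1 Hp). specialize (M1 ltac:(lra)). lra.
      + destruct (I2 ltac:(lra)). specialize (M2 ltac:(lra)). lra. }
  assert (G1 : forall k r, ys k < r < xs k -> f r <> 0 /\ Derive f r <> 0).
  { intros k r Hr. split.
    - apply (Hnz (ys k)); [left; apply Hya| exact Hr].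
    - apply (CZ c chi f Hg (ys k) (xs k) (Hya k) (Hdy k) (proj1 (Hyx k))); [|exact Hr].
      intros s Hs. apply (Hnz (ys k)); [left; apply Hya| exact Hs]. }
  assert (G2 : forall k r, xs k < r < ys (S k) -> f r <> 0 /\ Derive f r <> 0).
  { intros k r Hr.
    assert (Hd' : forall s, xs k < s < ys (S k) -> Derive f s <> 0).
    { intros s Hs. change (ys (S k)) with (nc (xs k)) in Hs. apply (Hnc (xs k)); auto.
      destruct (Hyx k); specialize (Hya k); lra. }
    split; [|apply Hd'; auto].
    assert (Hall : forall s, xs k <= s <= r -> Derive f s <> 0).
    { intros s Hs. destruct (Req_dec s (xs k)) as [->|Hne]; auto. apply Hd'; lra. }
    destruct (MONO c chi f Hg (xs k) r ltac:(lra) Hall) as [M1 M2].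
    rewrite Hfx in M1, M2.
    destruct (Rlt_le_dec 0 (Derive f (xs k))) as [Hp|Hn].
    + specialize (M1 Hp); lra.
    + assert (Derive f (xs k) < 0) by (destruct Hn; auto; exfalso; apply (Hdx k); auto).
      specialize (M2 H); lra. }
  assert (Hunb : forall B, exists k, B < ys k).
  { intros B. apply NNPP. intros Hno.
    assert (Hb : forall k, ys k <= B).
    { intros k. destruct (Rle_lt_dec (ys k) B); auto. exfalso; apply Hno; exists k; auto. }
    assert (Hgr : Un_growing ys) by (intros k; destruct (Hyx k); lra).
    destruct (growing_cv ys Hgr) as [l Hl]. { exists B. intros x [k ->]. apply Hb. }
    assert (Hlx : Un_cv xs l).
    { apply (cv_squeeze ys xs l Hl). intros k; destruct (Hyx k); lra. }
    assert (Hl1 : 1 < l) by (generalize (growing_ineq ys l Hgr Hl 0%nat) (Hya 0%nat); lra).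
    assert (Hfl : f l = 0).
    { apply (cv_zero_const (fun i => f (xs i))); auto.
      apply continuity_seq; auto. apply (g_cf c chi f Hg). }
    assert (Hdl : Derive f l = 0).
    { apply (cv_zero_const (fun i => Derive f (ys i))); auto.
      apply continuity_seq; auto. apply (g_cd c chi f Hg). }
    apply (g_no_double_right c chi f Hg l); auto. }
  exists xs, ys. split; [|split; [|split; [|split; [|split]]]].
  - intros x Hx. split.
    + intros H0. destruct (Hunb x) as [k0 Hk0].
      revert Hk0. induction k0 as [|k IH]; intros Hk0.
      * exfalso. destruct (G0 x); auto.
      * destruct (Rlt_le_dec x (ys k)) as [Hlt|Hge]; auto.
        destruct (Hyx k) as [Hk1 Hk2].
        destruct (Rtotal_order x (xs k)) as [Hl|[He|Hg2]].
        -- exfalso. destruct Hge as [Hge|Hge].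
           ++ destruct (G1 k x); auto.
           ++ subst x. apply (Hfy k); auto.
        -- exists k; auto.
        -- exfalso. destruct (G2 k x); auto.
    + intros [k ->]. auto.
  - intros k. specialize (Hya k); destruct (Hyx k); lra.
  - intros y Hy. split.
    + intros H0. destruct (Hunb y) as [k0 Hk0].
      revert Hk0. induction k0 as [|k IH]; intros Hk0.
      * exfalso. destruct (G0 y); auto.
      * destruct (Rlt_le_dec y (ys k)) as [Hlt|Hge]; auto.
        destruct Hge as [Hge|Hge]; [|exists k; auto].
        destruct (Hyx k) as [Hk1 Hk2].
        destruct (Rtotal_order y (xs k)) as [Hl|[He|Hg2]].
        -- exfalso. destruct (G1 k y); auto.
        -- exfalso. subst y. apply (Hdx k); auto.
        -- exfalso. destruct (G2 k y); auto.
    + intros [k ->]. auto.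
  - intros k. specialize (Hya k); lra.
  - apply Hya.
  - apply Hyx.
Qed.

Theorem theorem29 (c : R) (psi : nat -> R -> R) (lam : nat -> C)
    (chi : nat -> R) (n : nat) :
  0 < c -> pswf_system c psi lam chi -> c ^ 2 < chi n ->
  1 < sqrt (chi n) / c /\
  exists xs ys : nat -> R,
    (* xs enumerates the roots of psi_n in (1, oo) *)
    (forall x, 1 < x -> (psi n x = 0 <-> exists k, x = xs k)) /\
    (forall k, 1 < xs k) /\
    (* ys enumerates the roots of psi_n' in (1, oo) *)
    (forall y, 1 < y -> (Derive (psi n) y = 0 <-> exists k, y = ys k)) /\
    (forall k, 1 < ys k) /\
    (* sqrt(chi_n)/c < y_1 < x_1 < y_2 < x_2 < ... *)
    sqrt (chi n) / c < ys 0%nat /\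
    (forall k, ys k < xs k /\ xs k < ys (S k)).
Proof.
  intros Hc Hsys Hchi.
  destruct Hsys as [Heig [Hlam [Hnorm [Horth [Hord [Hcomp [Hpos [Hinc [Hder Hode]]]]]]]]].
  assert (Hg : good c (chi n) (psi n)).
  { split; auto. split; auto. split; [apply Hder|]. split; [apply Hode|].
    apply NNPP. intro Hno.
    assert (Hz : forall x, -1 < x < 1 -> psi n x = 0).
    { intros x Hx. apply NNPP. intro Hne. apply Hno. exists x; auto. }
    assert (H0 : is_RInt (fun _ : R => 0) (-1) 1 1).
    { apply (is_RInt_ext (fun t => psi n t ^ 2)); [|apply Hnorm].
      intros x Hx. rewrite Rmin_left in Hx by lra. rewrite Rmax_right in Hx by lra.
      rewrite Hz by lra. change ((0:R) ^ 2 = (0:R)). ring. }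
    assert (H1 := is_RInt_const (-1) 1 0).
    apply (is_RInt_unique (V := R_CompleteNormedModule)) in H0. apply (is_RInt_unique (V := R_CompleteNormedModule)) in H1. rewrite H0 in H1.
    unfold scal in H1. simpl in H1. unfold mult in H1. simpl in H1. lra. }
  split.
  - apply (g_a c (chi n) (psi n) Hg).
  - apply main_f; auto.
Qed.
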